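(* Fix integers $N\ge 2$ and $K\ge 1$. The class $M^{\text{DISTMULT}}$ is not universal, i.e. $\pi(\mathcal{M}^{\text{DISTMULT}})\ne\pi(\mathbb{R}^{N\times N\times K})$.
   Context: There are $N$ entities and $K$ relations. A score-based model assigns a score $s_k(i,j)\in\mathbb{R}$ to each triple, $i,j\in\{1,\dots,N\}$, $k\in\{1,\dots,K\}$; its scoring tensor $\mathcal{S}\in\mathbb{R}^{N\times N\times K}$ has frontal slices $\mathbf{S}_k$ with $[\mathbf{S}_k]_{ij}=s_k(i,j)$. For a real $N\times N$ matrix $\mathbf{S}$, $\pi(\mathbf{S})$ is the matrix of dense ranks: $\pi_{ij}(\mathbf{S})=1+$ (number of distinct values among entries of $\mathbf{S}$ strictly larger than $s_{ij}$). For tensors, $\pi$ acts slicewise; for a set $X$, $\pi(X)=\{\pi(x):x\in X\}$. DISTMULT of size $r$: parameters $\mathbf{A}\in\mathbb{R}^{N\times r}$ (rows $\mathbf{a}_i$), $\mathbf{R}\in\mathbb{R}^{K\times r}$ (rows $\mathbf{r}_k$), score $\mathbf{a}_i^T\mathrm{diag}(\mathbf{r}_k)\mathbf{a}_j$; $\mathcal{M}^{\text{DISTMULT}}$ is the set of scoring tensors of all DISTMULT models of all sizes $r\in\mathbb{N}^+$. *)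

(* Defs.v *)
From HB Require Import structures.
From mathcomp Require Import all_boot all_order all_algebra.
From mathcomp Require Import reals.
Set Implicit Arguments. Unset Strict Implicit. Unset Printing Implicit Defensive.
Import Order.TTheory GRing.Theory Num.Theory.
Local Open Scope ring_scope.

(* A scoring tensor in R^{N x N x K}: frontal slices S_k indexed by k : 'I_K. *)
Definition tensor (R : realType) (N K : nat) := {ffun 'I_K -> 'M[R]_N}.

Definition dense_rank_entry (R : realType) (N : nat) (S : 'M[R]_N) (i j : 'I_N) : nat :=
  (size (undup [seq v <- [seq S p q | p <- enum 'I_N, q <- enum 'I_N] | S i j < v])).+1.

Definition dense_rank (R : realType) (N : nat) (S : 'M[R]_N) : 'M[nat]_N :=
  \matrix_(i, j) dense_rank_entry S i j.

Definition pi_tensor (R : realType) (N K : nat) (T : tensor R N K) : {ffun 'I_K -> 'M[nat]_N} :=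
  [ffun k => dense_rank (T k)].

Definition pi_set (R : realType) (N K : nat) (X : tensor R N K -> Prop)
  : {ffun 'I_K -> 'M[nat]_N} -> Prop :=
  fun P => exists T, X T /\ P = pi_tensor T.

(* Scoring tensor of the DISTMULT model of size r with parameters A (N x r), Rm (K x r):
   s_k(i,j) = a_i^T diag(r_k) a_j. *)
Definition distmult_tensor (R : realType) (N K r : nat)
  (A : 'M[R]_(N, r)) (Rm : 'M[R]_(K, r)) : tensor R N K :=
  [ffun k => \matrix_(i, j) \sum_(l < r) A i l * Rm k l * A j l].

Definition M_distmult (R : realType) (N K : nat) : tensor R N K -> Prop :=
  fun T => exists r : nat, (0 < r)%N /\
    exists (A : 'M[R]_(N, r)) (Rm : 'M[R]_(K, r)), T = distmult_tensor A Rm.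

(* Main.v *)
Require Import Defs.
From mathcomp Require Import all_boot all_order all_algebra.
From mathcomp Require Import reals.
Import Order.TTheory GRing.Theory Num.Theory.
Local Open Scope ring_scope.

Lemma dre_eq (R : realType) (N : nat) (S : 'M[R]_N) (i j i' j' : 'I_N) :
  S i j = S i' j' -> dense_rank_entry S i j = dense_rank_entry S i' j'.
Proof. by rewrite /dense_rank_entry => ->. Qed.

Theorem theorem8 (R : realType) (N K : nat) (hN : (2 <= N)%N) (hK : (1 <= K)%N) :
  pi_set (@M_distmult R N K) <> pi_set (fun _ : tensor R N K => True).
Proof.
move=> E.
pose i0 : 'I_N := Ordinal (leq_trans (isT : (0 < 2)%N) hN).
pose i1 : 'I_N := Ordinal hN.
pose k0 : 'I_K := Ordinal hK.
pose M0 : 'M[R]_N := \matrix_(i, j) (if (i == i0) && (j == i1) then 1 else 0).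
pose T0 : tensor R N K := [ffun => M0].
have : pi_set (fun _ : tensor R N K => True) (pi_tensor T0) by exists T0.
rewrite -E => -[T [[r [_ [A [Rm ->]]]] H]].
have := congr1 (fun f : {ffun 'I_K -> 'M[nat]_N} => f k0 i0 i1 == f k0 i1 i0) H.
rewrite /= /pi_tensor !ffunE /dense_rank !mxE.
have Hs : forall S : 'M[R]_N, (forall i j, S i j = S j i) ->
    dense_rank_entry S i0 i1 = dense_rank_entry S i1 i0.
  by move=> S hS; apply: dre_eq.
rewrite [in X in _ = X]Hs; last first.
  by move=> i j; rewrite !mxE; apply: eq_bigr => l _; rewrite mulrC [A i l * _]mulrC mulrA.
rewrite eqxx => /eqP.
rewrite /dense_rank_entry.
have n01 : i1 != i0 by [].
rewrite !mxE eqxx (negbTE n01) /=.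
have -> : [seq v <- [seq M0 p q | p <- enum 'I_N, q <- enum 'I_N] | 1 < v] = [::].
  apply/eqP; rewrite -size_eq0 size_filter -leqn0 leqNgt -has_count.
  apply/hasPn => v /allpairsP [[p q] [_ _ ->]] /=.
  by rewrite mxE; case: ifP => _; rewrite ?ltxx // ltNge ler01.
have Hin : (1 : R) \in [seq v <- [seq M0 p q | p <- enum 'I_N, q <- enum 'I_N] | 0 < v].
  rewrite mem_filter ltr01 /=.
  apply/allpairsP; exists (i0, i1); rewrite !mem_enum /= mxE !eqxx; by [].
rewrite -mem_undup in Hin.
by case: (undup _) Hin.
Qed.
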